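(* Let a graph grammar (a finite set of substitutions $Sub_i=(\Gamma_i,\Gamma_i',V_{i,0},\varphi_i)$, $i=1,\dots,r$) be local, locally bounded and respect connectivity, and let $n$ be sufficiently large, with $G(0)\in GC_n$. Then the grammar is metrically bounded from above: there exists a constant $C=C(n)>0$ such that for each spin graph $\alpha=(G,s)$ (with $G\in GC_n$), each pair of vertices $x,y\in V(G)$ and each transformation $T=T(Sub_i,\psi)$ applicable to $\alpha$, $$d_{TG}(x,y)\le d_G(x,y)+C,$$ where $TG$ denotes the graph of $T\alpha$.
   Context: Graphs are non-directed, connected, with at most one edge between any two vertices and every vertex of finite degree. $GF_n$ (resp. $GC_n$) is the set of finite (resp. countable) such graphs in which every vertex has degree at most $n$. $d_G(x,y)$ is the graph distance (minimal number of edges of a path from $x$ to $y$) in $G$. A spin graph is a pair $\alpha=(G,s)$ with $s:V(G)\to S$ for a fixed alphabet $S$. A substitution rule $Sub=(\Gamma,\Gamma',V_0,\varphi)$ consists of two finite spin graphs $\Gamma,\Gamma'$, a subset $V_0\subset V(\Gamma)$ and a map $\varphi:V_0\to V(\Gamma')$ ($V_0$ and $\Gamma'$ may be empty). Given an isomorphism of spin graphs $\psi:\Gamma\to\Gamma_1$ onto a spin subgraph $\Gamma_1$ of $\alpha$, the transformation $T(Sub,\psi)\alpha$ is obtained by: taking the disjoint union of $\alpha$ and $\Gamma'$, deleting all links of $\Gamma_1$, deleting all vertices of $\psi(V(\Gamma))\setminus\psi(V_0)$ together with their incident links, and identifying each $\psi(v)$, $v\in V_0$, with $\varphi(v)\in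 V(\Gamma')$; spins outside $\Gamma_1$ are inherited from $\alpha$ and on $V(\Gamma')$ from $\Gamma'$. A graph grammar is a finite set of substitutions; it is local if every $\Gamma_i$ is connected; it is locally bounded if, for all sufficiently large $n$, the sets $GF_n$ and $GC_n$ are invariant under all its substitutions; it respects connectivity if $T(Sub_i,\psi)\alpha$ is connected whenever $\alpha$ is connected, for all possible $i,\psi$. *)

(* Defs.v *)
From HB Require Import structures.
From mathcomp Require Import all_boot.

Set Implicit Arguments.
Unset Strict Implicit.
Unset Printing Implicit Defensive.

Record spin_graph (S : Type) := SpinGraph {
  sg_V : countType;
  sg_adj : sg_V -> sg_V -> Prop;
  sg_spin : sg_V -> S }.

Record fspin_graph (S : Type) := FSpinGraph {
  fg_V : finType;
  fg_adj : rel fg_V;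
  fg_spin : fg_V -> S }.

Arguments sg_adj {S} s _ _.
Arguments sg_spin {S} s _.
Arguments fg_adj {S} f _ _.
Arguments fg_spin {S} f _.

Inductive walk {S} (G : spin_graph S) : nat -> sg_V G -> sg_V G -> Prop :=
| walk0 x : @walk S G 0 x x
| walkS k x y z : sg_adj G x y -> @walk S G k y z -> @walk S G k.+1 x z.
Arguments walk {S} G _ _ _.

Definition is_dist {S} (G : spin_graph S) (x y : sg_V G) (d : nat) : Prop :=
  walk G d x y /\ forall k, walk G k x y -> d <= k.

Definition connected {S} (G : spin_graph S) : Prop :=
  forall x y : sg_V G, exists k, walk G k x y.

Definition simple {S} (G : spin_graph S) : Prop :=
  (forall x y, sg_adj G x y -> sg_adj G y x) /\ (forall x, ~ sg_adj G x x).

Definition locally_finite {S} (G : spin_graph S) : Prop :=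
  forall x, exists l : seq (sg_V G), forall y, sg_adj G x y -> y \in l.

Definition deg_le {S} (G : spin_graph S) (n : nat) : Prop :=
  forall x, exists l : seq (sg_V G), size l <= n /\
    forall y, sg_adj G x y -> y \in l.

Definition finite_vertices {S} (G : spin_graph S) : Prop :=
  exists l : seq (sg_V G), forall x, x \in l.

Definition is_graph {S} (G : spin_graph S) : Prop :=
  simple G /\ connected G /\ locally_finite G.

Definition GC {S} (n : nat) (G : spin_graph S) : Prop := is_graph G /\ deg_le G n.
Definition GF {S} (n : nat) (G : spin_graph S) : Prop := GC n G /\ finite_vertices G.

Inductive fwalk {S} (G : fspin_graph S) : nat -> fg_V G -> fg_V G -> Prop :=
| fwalk0 x : @fwalk S G 0 x x
| fwalkS k x y z : fg_adj G x y -> @fwalk S G k y z -> @fwalk S G k.+1 x z.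
Arguments fwalk {S} G _ _ _.

Definition fsimple {S} (G : fspin_graph S) : Prop :=
  symmetric (fg_adj G) /\ irreflexive (fg_adj G).

Definition fconnected {S} (G : fspin_graph S) : Prop :=
  forall x y : fg_V G, exists k, fwalk G k x y.

Record subst (S : Type) := Subst {
  sub_G : fspin_graph S;
  sub_G' : fspin_graph S;
  sub_V0 : {set fg_V sub_G};
  sub_phi : {v : fg_V sub_G | v \in sub_V0} -> fg_V sub_G' }.

Arguments sub_G {S} s.
Arguments sub_G' {S} s.
Arguments sub_V0 {S} s.
Arguments sub_phi {S} s _.

Definition subst_wf {S} (sb : subst S) : Prop :=
  fsimple (sub_G sb) /\ fsimple (sub_G' sb).

(* psi : Gamma -> alpha is an isomorphism of spin graphs onto a spin
   subgraph Gamma_1 of alpha (Gamma_1 := image of psi). *)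
Definition embedding {S} (sb : subst S) (al : spin_graph S)
    (psi : fg_V (sub_G sb) -> sg_V al) : Prop :=
  injective psi /\
  (forall v, sg_spin al (psi v) = fg_spin (sub_G sb) v) /\
  (forall u v, fg_adj (sub_G sb) u v -> sg_adj al (psi u) (psi v)).

Section Transformation.
Context {S : Type} (sb : subst S) (al : spin_graph S)
        (psi : fg_V (sub_G sb) -> sg_V al).

(* vertices of T alpha: the vertices of alpha not in psi(V(Gamma)),
   disjoint union with V(Gamma'); psi(v), v in V0, is identified with phi(v) *)
Definition Tvert : countType :=
  ({x : sg_V al | x \notin codom psi} + fg_V (sub_G' sb))%type.

(* the vertex of T alpha corresponding to a vertex x of alpha
   (None if x is deleted) *)
Definition Tproj (x : sg_V al) : option Tvert :=
  match (insub x : option {x : sg_V al | x \notin codom psi}) with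
  | Some x' => Some (inl x')
  | None =>
      match [pick v | psi v == x] with
      | Some v =>
          omap (fun w => inr (sub_phi sb w))
               (insub v : option {v : fg_V (sub_G sb) | v \in sub_V0 sb})
      | None => None
      end
  end.

Definition link (x y : sg_V al) : Prop :=
  exists u v, psi u = x /\ psi v = y /\ fg_adj (sub_G sb) u v.

Definition Tadj (a b : Tvert) : Prop :=
  a != b /\
  ((exists x y, Tproj x = Some a /\ Tproj y = Some b /\
                sg_adj al x y /\ ~ link x y)
   \/ (exists u u', a = inr u /\ b = inr u' /\ fg_adj (sub_G' sb) u u')).

Definition Tspin (a : Tvert) : S :=
  match a with
  | inl x => sg_spin al (val x)
  | inr u => fg_spin (sub_G' sb) u
  end.

Definition Tgraph : spin_graph S := SpinGraph Tadj Tspin.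

End Transformation.

Arguments is_dist {S} G x y d.
Arguments Tproj {S} sb al psi x.
Arguments Tgraph {S} sb al psi.
Arguments embedding {S} sb al psi.

(* Main.v *)
Require Import Defs.
From HB Require Import structures.
From mathcomp Require Import all_boot.
From mathcomp Require Import zify.

Set Implicit Arguments.
Unset Strict Implicit.
Unset Printing Implicit Defensive.

Lemma walk_cat S (G : spin_graph S) k l x y z :
  walk G k x y -> walk G l y z -> walk G (k + l) x z.
Proof.
elim => {k x y} [x //|k x x1 y H _ IH] Hl.
rewrite addSn; apply: walkS H (IH Hl).
Qed.

Lemma fin_bound (T : finType) (P : T -> nat -> Prop) :
  (forall t, exists k, P t k) -> exists K, forall t, exists k, k <= K /\ P t k.
Proof.
move=> H.
suff [K HK]: exists K, forall t, t \in enum T -> exists k, k <= K /\ P t k.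
  by exists K => t; apply: HK; rewrite mem_enum.
elim: (enum T) => [|t s [K HK]]; first by exists 0.
have [k Hk] := H t.
exists (maxn k K) => t'; rewrite inE => /orP [/eqP -> | /HK [k' [Hk' Pk']]].
  by exists k; split=> //; rewrite leq_maxl.
by exists k'; split=> //; apply: leq_trans Hk' (leq_maxr _ _).
Qed.

Section Gen.
Variables (S : Type) (sb : subst S) (al : spin_graph S)
          (psi : fg_V (sub_G sb) -> sg_V al).

Lemma Tproj_out x (H : x \notin codom psi) :
  Tproj sb al psi x = Some (inl (exist _ x H)).
Proof. by rewrite /Tproj (insubT (fun x => x \notin codom psi) H). Qed.

Lemma Tproj_inl x x' : Tproj sb al psi x = Some (inl x') -> x = val x'.
Proof.
rewrite /Tproj; case: insubP => [u _ <- [<-] //|_].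
case: pickP => // v _; by case: (insub v).
Qed.

Hypothesis psi_inj : injective psi.

Lemma Tproj_psi v : Tproj sb al psi (psi v) =
  omap (fun w => inr (sub_phi sb w)) (insub v : option {v : fg_V (sub_G sb) | v \in sub_V0 sb}).
Proof.
rewrite /Tproj insubF; last by rewrite codom_f.
case: pickP => [v' /eqP /psi_inj -> //| /(_ v)]; by rewrite eqxx.
Qed.

Lemma adj_T x y a b : Tproj sb al psi x = Some a -> Tproj sb al psi y = Some b ->
  sg_adj al x y -> a != b -> (x \notin codom psi) || (y \notin codom psi) ->
  Tadj a b.
Proof.
move=> Ha Hb Hxy Hab Hc; split=> //; left; exists x, y; do 3! split=> //.
move=> [u [v [hu [hv _]]]]; move: Hc; by rewrite -hu -hv !codom_f.
Qed.

Hypothesis V0all : forall v, v \in sub_V0 sb.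
Hypothesis irr : forall x, ~ sg_adj al x x.
Variable K : nat.
Hypothesis HK : forall u w, exists m, m <= K /\ walk (Tgraph sb al psi) m (inr u) (inr w).

Lemma Tproj_in v : Tproj sb al psi (psi v) = Some (inr (sub_phi sb (exist _ v (V0all v)))).
Proof. by rewrite Tproj_psi (insubT (fun v => v \in sub_V0 sb) (V0all v)). Qed.

Lemma neq_xy x y : sg_adj al x y -> x != y.
Proof. by move=> H; apply/eqP => E; subst; apply: (irr H). Qed.

Lemma suffix k x y b : walk al k x y -> Tproj sb al psi y = Some b ->
  (exists a, Tproj sb al psi x = Some a /\ walk (Tgraph sb al psi) k a b /\ x \notin codom psi)
  \/ (exists u m, m <= k /\ walk (Tgraph sb al psi) m (inr u) b).
Proof.
move=> Hw; elim: Hw b => {k x y} [x | k x x1 y Hadj Hw IH] b Hb.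
  case: (boolP (x \in codom psi)) => Hx.
    right; have [v Ev] := codomP Hx; rewrite Ev Tproj_in in Hb; case: Hb => <-.
    by exists (sub_phi sb (exist _ v (V0all v))), 0; split=> //; apply: walk0.
  by left; exists b; split=> //; split=> //; apply: walk0.
have [[a1 [Ha1 [Hw1 Hx1]]] | [u [m [Hm Hw']]]] := IH b Hb; last first.
  by right; exists u, m; split=> //; apply: leqW.
rewrite Tproj_out in Ha1; case: Ha1 => Ea1; subst a1.
case: (boolP (x \in codom psi)) => Hx.
  have [v Ev] := codomP Hx; right.
  exists (sub_phi sb (exist _ v (V0all v))), k.+1; split=> //.
  apply: walkS Hw1; apply: (@adj_T x x1) => //; first by rewrite Ev Tproj_in.
    exact: Tproj_out.
  by rewrite Hx1 orbT.
left; exists (inl (exist _ x Hx)); split; first exact: Tproj_out.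
split=> //; apply: walkS Hw1; apply: (@adj_T x x1) => //; try exact: Tproj_out.
  by apply/eqP => -[] E; subst; exact: irr Hadj.
by rewrite Hx.
Qed.

Lemma main k x y : walk al k x y -> forall a b, Tproj sb al psi x = Some a ->
  Tproj sb al psi y = Some b -> exists m, m <= k + K /\ walk (Tgraph sb al psi) m a b.
Proof.
elim => {k x y} [x | k x x1 y Hadj Hw IH] a b Ha Hb.
  rewrite Ha in Hb; case: Hb => ->; exists 0; split=> //; exact: walk0.
case: (boolP (x \in codom psi)) => Hx.
  have [v Ev] := codomP Hx; rewrite Ev Tproj_in in Ha; case: Ha => <-.
  have [[a' [_ [_ Hx']]] | [u [m [Hm Hw']]]] := suffix (walkS Hadj Hw) Hb.
    by rewrite Hx in Hx'.
  have [m0 [Hm0 Hw0]] := HK (sub_phi sb (exist _ v (V0all v))) u.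
  exists (m0 + m); split; first by rewrite addnC leq_add.
  exact: walk_cat Hw0 Hw'.
rewrite Tproj_out in Ha; case: Ha => <-.
case: (boolP (x1 \in codom psi)) => Hx1.
  have [v1 Ev1] := codomP Hx1.
  have Ha1 : Tproj sb al psi x1 = Some (inr (sub_phi sb (exist _ v1 (V0all v1)))).
    by rewrite Ev1 Tproj_in.
  have [m [Hm Hw1]] := IH _ _ Ha1 Hb.
  exists m.+1; split; first by rewrite addSn.
  apply: walkS Hw1; apply: (@adj_T x x1) => //; first exact: Tproj_out.
  by rewrite Hx.
have [m [Hm Hw1]] := IH _ _ (Tproj_out Hx1) Hb.
exists m.+1; split; first by rewrite addSn.
apply: walkS Hw1; apply: (@adj_T x x1) => //; try exact: Tproj_out.
  by apply/eqP => -[] E; subst; exact: irr Hadj.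
by rewrite Hx.
Qed.

End Gen.

Lemma fwalk_T S (sb : subst S) al psi k u w :
  irreflexive (fg_adj (sub_G' sb)) ->
  fwalk (sub_G' sb) k u w -> walk (Tgraph sb al psi) k (inr u) (inr w).
Proof.
move=> Hirr; elim => {k u w} [u|k u u1 w H _ IH]; first exact: walk0.
apply: walkS IH; split.
  by apply/eqP => -[] E; subst; rewrite Hirr in H.
by right; exists u, u1.
Qed.

Section Graphs.
Variables (S : Type) (G : fspin_graph S).

Definition al1 := @SpinGraph S (fg_V G) (fun x y => fg_adj G x y) (fg_spin G).

Lemma fwalk_walk1 k x y : fwalk G k x y -> walk al1 k x y.
Proof.
elim => {k x y} [x|k x x1 y H _ IH]; [exact: walk0 | by apply: (@walkS S al1 k x x1 y)].
Qed.

Lemma al1_graph : fsimple G -> fconnected G -> is_graph al1.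
Proof.
move=> [Hs Hi] Hc; split; [split|split].
- by move=> x y /=; rewrite Hs.
- by move=> x /=; rewrite Hi.
- by move=> x y; have [k Hk] := Hc x y; exists k; apply: fwalk_walk1.
- by move=> x; exists (enum (fg_V G)) => y _; rewrite mem_enum.
Qed.

Definition hadj (p q : (fg_V G + fg_V G * bool)%type) : bool :=
  match p, q with
  | inl u, inl v => fg_adj G u v
  | inl u, inr (v, _) => u == v
  | inr (u, _), inl v => u == v
  | inr _, inr _ => false
  end.

Definition hspin (p : (fg_V G + fg_V G * bool)%type) : S :=
  match p with inl u => fg_spin G u | inr (u, _) => fg_spin G u end.

Definition al0 := @SpinGraph S (fg_V G + fg_V G * bool)%type
  (fun x y => hadj x y) hspin.

Lemma fwalk_walk0 k x y : fwalk G k x y -> walk al0 k (inl x) (inl y).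
Proof.
elim => {k x y} [x|k x x1 y H _ IH]; [exact: walk0 | exact: walkS IH].
Qed.

Definition base (p : (fg_V G + fg_V G * bool)%type) : fg_V G :=
  match p with inl u => u | inr (u, _) => u end.

Lemma to_base p : exists k, walk al0 k p (inl (base p)).
Proof.
case: p => [u|[u b]]; first by exists 0; apply: walk0.
by exists 1; apply: (@walkS S al0 0 _ (inl u)); [rewrite /= eqxx | exact: walk0].
Qed.

Lemma from_base p : exists k, walk al0 k (inl (base p)) p.
Proof.
case: p => [u|[u b]]; first by exists 0; apply: walk0.
by exists 1; apply: (@walkS S al0 0 _ (inr (u, b))); [rewrite /= eqxx | exact: walk0].
Qed.

Lemma al0_graph : fsimple G -> fconnected G -> is_graph al0.
Proof.
move=> [Hs Hi] Hc; split; [split|split].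
- case=> [u|[u b]] [v|[v c]] //=; [by rewrite Hs | by rewrite eq_sym | by rewrite eq_sym].
- by case=> [u|[u b]] //=; rewrite Hi.
- move=> x y; have [k1 H1] := to_base x; have [k3 H3] := from_base y.
  have [k2 H2] := Hc (base x) (base y).
  exists (k1 + (k2 + k3)); apply: walk_cat H1 _; apply: walk_cat H3.
  exact: fwalk_walk0.
- by move=> x; exists (enum [set: (fg_V G + fg_V G * bool)%type]) => y _; by rewrite mem_enum inE.
Qed.

End Graphs.

Lemma V0_all S (sb : subst S) :
  subst_wf sb -> fconnected (sub_G sb) ->
  (forall (al : spin_graph S) (psi : fg_V (sub_G sb) -> sg_V al),
     embedding sb al psi -> is_graph al -> connected (Tgraph sb al psi)) ->
  forall v, v \in sub_V0 sb.
Proof.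
move=> [Hs _] Hc Hrc v; apply/negPn/negP => Hv.
pose psi0 := (fun x : fg_V (sub_G sb) => (inl x : sg_V (al0 (sub_G sb)))).
have Hinj : injective psi0 by move=> x y [].
have Hemb : embedding sb (al0 (sub_G sb)) psi0 by split=> //.
have Hcon := Hrc _ _ Hemb (al0_graph Hs Hc).
have Hh : forall b, (inr (v, b) : sg_V (al0 (sub_G sb))) \notin codom psi0.
  by move=> b; apply/negP => /codomP [z].
pose hv b : sg_V (Tgraph sb _ psi0) :=
  inl (exist (fun x : sg_V (al0 (sub_G sb)) => x \notin codom psi0) (inr (v, b)) (Hh b)).
have key : forall k p q, walk (Tgraph sb _ psi0) k p q ->
   forall b, p = hv b -> q = p.
  move=> k p q; elim => {k p q} [p //|k p p1 q Hadj _ _] b Ep; subst p.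
  case: Hadj => _ [[x [y [Hx [Hy [Hxy _]]]]] | [u [u' [E _]]]] //.
  move/Tproj_inl: Hx => /= Ex; subst x.
  move: y Hy Hxy => [y|[y c]] //= Hy /eqP Ey; subst y.
  by rewrite (Tproj_psi Hinj) insubF in Hy; last by apply/negbTE.
have [k Hk] := Hcon (hv true) (hv false).
by have [] := key _ _ _ Hk true erefl.
Qed.

Lemma Gp_conn S (sb : subst S) :
  subst_wf sb -> fconnected (sub_G sb) ->
  (forall (al : spin_graph S) (psi : fg_V (sub_G sb) -> sg_V al),
     embedding sb al psi -> is_graph al -> connected (Tgraph sb al psi)) ->
  fconnected (sub_G' sb).
Proof.
move=> [Hs _] Hc Hrc u w.
pose psi1 := (fun x : fg_V (sub_G sb) => (x : sg_V (al1 (sub_G sb)))).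
have Hemb : embedding sb (al1 (sub_G sb)) psi1 by split=> //.
have Hcon := Hrc _ _ Hemb (al1_graph Hs Hc).
have key : forall k p q, walk (Tgraph sb _ psi1) k p q ->
   forall u w, p = inr u -> q = inr w -> fwalk (sub_G' sb) k u w.
  move=> k p q; elim => {k p q} [p|k p p1 q Hadj _ IH] u0 w0 Ep Eq.
    by subst p; case: Eq => ->; apply: fwalk0.
  subst p; case: p1 Hadj IH => [[x1 Hx1]|u1] Hadj IH.
    by have := Hx1; rewrite (codom_f psi1 x1).
  case: Hadj => _ [[x [y [_ [_ [Hxy Hl]]]]] | [u' [u'' [[E1] [[E2] H]]]]].
    by case: Hl; exists x, y.
  subst; apply: fwalkS H _; exact: IH.
have [k Hk] := Hcon (inr u) (inr w).
by exists k; apply: key Hk _ _ erefl erefl.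
Qed.

Theorem lemma2 (S : finType) (r : nat) (Sub : 'I_r -> subst S) :
  (* the substitutions are substitution rules (Gamma, Gamma' spin graphs) *)
  (forall i, subst_wf (Sub i)) ->
  (* local *)
  (forall i, fconnected (sub_G (Sub i))) ->
  (* locally bounded *)
  (exists N, forall n, N <= n ->
     forall i (al : spin_graph S) (psi : fg_V (sub_G (Sub i)) -> sg_V al),
       embedding (Sub i) al psi ->
       (GF n al -> GF n (Tgraph (Sub i) al psi)) /\ (GC n al -> GC n (Tgraph (Sub i) al psi))) ->
  (* respects connectivity *)
  (forall i (al : spin_graph S) (psi : fg_V (sub_G (Sub i)) -> sg_V al),
     embedding (Sub i) al psi -> is_graph al -> connected (Tgraph (Sub i) al psi)) ->
  (* metrically bounded from above, for n sufficiently large *)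
  exists N, forall n, N <= n ->
    exists C, 0 < C /\
      forall (al : spin_graph S), GC n al ->
      forall i (psi : fg_V (sub_G (Sub i)) -> sg_V al), embedding (Sub i) al psi ->
      forall (x y : sg_V al) (a b : sg_V (Tgraph (Sub i) al psi)),
        Tproj (Sub i) al psi x = Some a -> Tproj (Sub i) al psi y = Some b ->
        forall d d', is_dist al x y d -> is_dist (Tgraph (Sub i) al psi) a b d' ->
          d' <= d + C.
Proof.
move=> Hwf Hloc _ Hrc.
have HP : forall i, exists K, forall u w, exists m, m <= K /\
             fwalk (sub_G' (Sub i)) m u w.
  move=> i.
  have Hc := Gp_conn (Hwf i) (Hloc i) (@Hrc i).
  have [K HK] := @fin_bound (prod (fg_V (sub_G' (Sub i))) (fg_V (sub_G' (Sub i))))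
     (fun p k => fwalk (sub_G' (Sub i)) k p.1 p.2) (fun p => Hc p.1 p.2).
  by exists K => u w; apply: (HK (u, w)).
have [Km HKm] := fin_bound HP.
exists 0 => n _; exists Km.+1; split=> //.
move=> al [[[_ Hirr] _] _] i psi [Hinj _] x y a b Hx Hy d d' [Hd _] [_ Hmin].
have [Ki [HKi HPi]] := HKm i.
have HV0 := V0_all (Hwf i) (Hloc i) (@Hrc i).
have [_ Hi'] := Hwf i; have [_ Hirr'] := Hi'.
have HK : forall u w, exists m, m <= Ki /\ walk (Tgraph (Sub i) al psi) m (inr u) (inr w).
  move=> u w; have [m [Hm Hw]] := HPi u w; exists m; split=> //.
  exact: fwalk_T.
have [m [Hm Hw]] := main Hinj HV0 Hirr HK Hd Hx Hy.
have := Hmin _ Hw; lia.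
Qed.
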